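(* Let $m=2$ and $1\le k\le n-1$. If $|L|\ge 2^{n-1-k}$, then the class $\mathcal{C}^k_{ac}$ of all complete acyclic $k$-bounded binary CP-nets over $n$ variables is not learnable with membership queries to a limited oracle and not learnable with membership queries to a malicious oracle.
   Context: Variables $V=\{v_1,\dots,v_n\}$ with binary domains. An outcome assigns a value to every variable. A complete CP-net gives each $v_i$ a parent set $Pa(v_i)\subseteq V\setminus\{v_i\}$ and, for each assignment to $Pa(v_i)$, a strict order on $D_{v_i}$; parents are non-dummy. Acyclic: parent graph (edges $(v_j,v_i)$, $v_j\in Pa(v_i)$) is acyclic; $k$-bounded: all $|Pa(v_i)|\le k$. Improving flip: changing only $v_i$ to the value preferred under the order for context $o[Pa(v_i)]$; $o'\succ o$ iff a nonempty sequence of improving flips leads from $o$ to $o'$. A swap is an ordered pair $x=(x.1,x.2)$ of outcomes differing in exactly one variable; $\mathcal{X}_{swap}$ contains exactly one ordering of each such pair (fixed arbitrarily); the target concept is $c^*(x)=1$ iff $x.1\succ x.2$ under the target. A set $L\subseteq\mathcal{X}_{swap}$ is chosen in advance by an adversary. A limited oracle answers a membership query $x$ with $c^*(x)$ if $x\notin L$ and with ''I don't know'' if $x\in L$; a malicious oracle answers $c^*(x)$ if $x\notin L$ and $1-c^*(x)$ if $x\in L$; both are persistent. A class is learnable with membership queries to a limited (malicious) oracle if some algorithm exactly identifies every target concept in the class by asking such an oracle a number of queries polynomial in $n$, the target's size and $|L|$. *)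

(* Defs.v *)
From mathcomp Require Import all_boot.
Set Implicit Arguments. Unset Strict Implicit. Unset Printing Implicit Defensive.

Definition outcome (n : nat) : finType := {ffun 'I_n -> bool}.
Definition pair (n : nat) : finType := (outcome n * outcome n)%type.

(** A complete binary CP-net: parent sets and, for every variable i, the value of
    D_{v_i} that is preferred in the context given by an outcome.  The preference
    is required (in [cpnet_wf]) to depend only on the values of the parents, so
    [pref i] encodes a strict order on {false,true} for each parent assignment. *)
Record cpnet (n : nat) := CPNet {
  Pa : 'I_n -> {set 'I_n};
  pref : 'I_n -> outcome n -> bool
}.

Definition cpnet_wf n (N : cpnet n) : Prop :=
  (forall i, i \notin Pa N i) /\
  (forall i (o o' : outcome n), (forall j, j \in Pa N i -> o j = o' j) ->
      pref N i o = pref N i o') /\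
  (forall i j, j \in Pa N i -> exists o o' : outcome n,
      (forall l, l != j -> o l = o' l) /\ pref N i o <> pref N i o').

Definition parent_rel n (N : cpnet n) : rel 'I_n := fun a b => a \in Pa N b.

Definition acyclic n (N : cpnet n) : Prop :=
  forall i j, j \in Pa N i -> ~~ connect (parent_rel N) i j.

Definition k_bounded n (k : nat) (N : cpnet n) : Prop :=
  forall i, #|Pa N i| <= k.

Definition in_class n k (N : cpnet n) : Prop :=
  cpnet_wf N /\ acyclic N /\ k_bounded k N.

Definition improving n (N : cpnet n) : rel (outcome n) := fun o o' =>
  [exists i, (o i != pref N i o) &&
             (o' == [ffun j => if j == i then pref N i o else o j])].

Definition dominates n (N : cpnet n) (a b : outcome n) : bool :=
  [exists c, improving N b c && connect (improving N) c a].

Definition concept n (N : cpnet n) (x : pair n) : bool := dominates N x.1 x.2.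

Definition is_swap n (x : pair n) : bool :=
  #|[set i | x.1 i != x.2 i]| == 1.

Definition swap_space n (X : {set pair n}) : Prop :=
  (forall x, x \in X -> is_swap x) /\
  (forall a b : outcome n, is_swap (a, b) -> ((a, b) \in X) != ((b, a) \in X)).

Definition hyp n := pair n -> bool.

(** A deterministic adaptive learner with answers of type Ans: given the history
    of (query, answer) pairs, it either asks a membership query or outputs a
    hypothesis. *)
Definition learner n (Ans : Type) := seq (pair n * Ans) -> pair n + hyp n.

Fixpoint run n (Ans : Type) (A : learner n Ans) (orc : pair n -> Ans)
    (fuel : nat) (hist : seq (pair n * Ans)) : option (hyp n) :=
  match A hist with
  | inr h => Some h
  | inl x => match fuel with
             | 0 => None
             | f.+1 => run A orc f (rcons hist (x, orc x))
             end
  end.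

(** limited oracle: None = "I don't know"; queries outside X_swap get an
    uninformative answer *)
Definition limited_oracle n (X L : {set pair n}) (N : cpnet n) (x : pair n)
  : option bool :=
  if x \notin X then None else if x \in L then None else Some (concept N x).

Definition malicious_oracle n (X L : {set pair n}) (N : cpnet n) (x : pair n)
  : bool :=
  if x \notin X then false else if x \in L then ~~ concept N x else concept N x.

Definition identifies n (X : {set pair n}) (N : cpnet n) (r : option (hyp n)) :=
  exists h, r = Some h /\ forall x, x \in X -> h x = concept N x.

(** Since n, k, s are fixed, a query bound
    polynomial in n, the target size and |L| is just some number b. *)
Definition learnable_limited n k (X : {set pair n}) (s : nat) : Prop :=
  exists (A : learner n (option bool)) (b : nat),
    forall N : cpnet n, in_class k N ->
    forall L : {set pair n}, L \subset X -> #|L| <= s ->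
      identifies X N (run A (limited_oracle X L N) b [::]).

Definition learnable_malicious n k (X : {set pair n}) (s : nat) : Prop :=
  exists (A : learner n bool) (b : nat),
    forall N : cpnet n, in_class k N ->
    forall L : {set pair n}, L \subset X -> #|L| <= s ->
      identifies X N (run A (malicious_oracle X L N) b [::]).

(* Main.v *)
Require Import Defs.
From mathcomp Require Import all_boot.
From mathcomp Require Import zify.
Set Implicit Arguments. Unset Strict Implicit. Unset Printing Implicit Defensive.

Lemma run_ext n Ans (A : learner n Ans) (o1 o2 : pair n -> Ans) f h :
  o1 =1 o2 -> run A o1 f h = run A o2 f h.
Proof.
move=> E; elim: f h => [|f IH] h /=; case: (A h) => // x.
by rewrite E IH.
Qed.

Lemma swap_at n (x : pair n) : is_swap x ->
  exists i, x.1 i != x.2 i /\ forall j, j != i -> x.1 j = x.2 j.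
Proof.
rewrite /is_swap => /cards1P [i Ei]; exists i; split.
  by have : i \in [set i] := set11 i; rewrite -Ei inE.
move=> j nj; apply/eqP; apply/negPn/negP => H.
have : j \in [set i] by rewrite -Ei inE.
by rewrite inE (negbTE nj).
Qed.

Section Nets.
Variable m : nat.
Local Notation n := m.+1.

Definition net (P : {set 'I_n}) (g : outcome n -> bool) : cpnet n :=
  @CPNet n (fun i => if i == ord0 then P else set0)
           (fun i o => if i == ord0 then g o else true).

Variables (P : {set 'I_n}) (g : outcome n -> bool).
Hypothesis P0 : ord0 \notin P.
Hypothesis gdep : forall o o' : outcome n,
  (forall j, j \in P -> o j = o' j) -> g o = g o'.

Lemma gdep0 (o o' : outcome n) : (forall j, j != ord0 -> o j = o' j) -> g o = g o'.
Proof. move=> H; apply: gdep => j jP; apply: H; by apply: contraNneq P0 => <-. Qed.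

Definition phi (o : outcome n) : nat :=
  2 * #|[set j | (j != ord0) && o j]| + (o ord0 == g o).

Lemma improving_phi o o' : improving (net P g) o o' -> phi o < phi o'.
Proof.
case/existsP => i /andP [/= Hi /eqP ->].
rewrite /phi.
case: (eqVneq i ord0) => [ei | ni].
- subst i; rewrite eqxx in Hi *.
  have E : [set j | (j != ord0) && [ffun j0 => if j0 == ord0 then g o else o j0] j]
         = [set j | (j != ord0) && o j].
    by apply/setP => j; rewrite !inE ffunE; case: eqP.
  have Eg : g [ffun j0 => if j0 == ord0 then g o else o j0] = g o.
    by apply: gdep0 => j /negbTE; rewrite ffunE => ->.
  rewrite E Eg ffunE eqxx eqxx.
  move: Hi => /negbTE ->. by rewrite addn0 addn1.
- rewrite (negbTE ni) in Hi *.
  have oi : o i = false by move: Hi; case: (o i).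
  set o2 := [ffun _ => _].
  have E : [set j | (j != ord0) && o2 j] = i |: [set j | (j != ord0) && o j].
    apply/setP => j; rewrite !inE /o2 ffunE.
    by case: (eqVneq j i) => [->|] //=; rewrite ni.
  rewrite E cardsU1 inE ni oi /=.
  case: (o ord0 == g o); case: (o2 ord0 == g o2); lia.
Qed.

Lemma connect_phi a b : connect (improving (net P g)) a b -> phi a <= phi b.
Proof.
case/connectP => p; elim: p a => [|c p IH] a /=; first by move=> _ ->.
move=> /andP [/improving_phi H1 H2] E; exact: leq_trans (ltnW H1) (IH _ H2 E).
Qed.

Lemma dom_phi a b : dominates (net P g) a b -> phi b < phi a.
Proof.
case/existsP => c /andP [/improving_phi H1 /connect_phi H2]; exact: leq_trans H1 H2.
Qed.

Lemma pref_eq i (a b : outcome n) : (forall j, j != i -> a j = b j) ->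
  pref (net P g) i a = pref (net P g) i b.
Proof. move=> H /=; case: eqP => [ei|//]; subst i; apply: gdep0 => j; exact: H. Qed.

Lemma concept_swap (a b : outcome n) i : a i != b i -> (forall j, j != i -> a j = b j) ->
  concept (net P g) (a, b) = (a i == pref (net P g) i b).
Proof.
move=> ab H; change (dominates (net P g) a b = (a i == pref (net P g) i b)).
have Hp := pref_eq H.
case: eqP => [E|E].
- apply/existsP; exists a; rewrite connect0 andbT.
  apply/existsP; exists i; apply/andP; split.
    by rewrite -E eq_sym.
  apply/eqP/ffunP => j; rewrite ffunE.
  case: (eqVneq j i) => [->|/H ->] //.
- apply/negbTE/negP => /dom_phi H1.
  have H2 : phi a < phi b.
    apply: improving_phi; apply/existsP; exists i; apply/andP; split.
      by rewrite Hp; apply/eqP.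
    apply/eqP/ffunP => j; rewrite ffunE; case: (eqVneq j i) => [->|/H ->] //.
    rewrite Hp. move: ab E; by case: (a i); case: (b i); case: (pref _ i b).
  by move: (ltn_trans H1 H2); rewrite ltnn.
Qed.

Lemma net_class k : #|P| <= k -> (forall j, j \in P -> exists o o' : outcome n,
   (forall l, l != j -> o l = o' l) /\ g o <> g o') -> in_class k (net P g).
Proof.
move=> Pk gnd; split; [split; [|split]|split].
- move=> i /=; case: eqP => [->|]; [exact: P0 | by rewrite inE].
- move=> i o o' /=; case: eqP => // _; exact: gdep.
- move=> i j /=; case: eqP => [_ /gnd //|]; by rewrite inE.
- move=> i j /=; case: eqP => [-> jP|]; last by rewrite inE.
  apply/negP => /connectP [[|y p] /=].
  + move=> _ ej; move: P0; by rewrite -ej jP.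
  + case/andP; rewrite /parent_rel /=; case: eqP => [->|_].
      by rewrite (negbTE P0).
    by rewrite inE.
- move=> i /=; case: eqP => // _; by rewrite cards0.
Qed.

End Nets.

Lemma ord_neq0 m (j : 'I_m.+1) : (j != ord0) = (0 < j).
Proof. by rewrite lt0n. Qed.

Theorem proposition1 (n k : nat) (X : {set pair n}) :
  swap_space X -> 1 <= k <= n - 1 ->
  forall s : nat, 2 ^ (n - 1 - k) <= s ->
  ~ learnable_limited k X s /\ ~ learnable_malicious k X s.
Proof.
move: X; case: n => [|m] X [Xsw Xor] /andP [k1 kn] s Hs.
  by move: k1 kn; rewrite sub0n; lia.
have Hs' : 2 ^ (m - k) <= s by move: Hs; rewrite subn1.
pose A : {set 'I_m.+1} := [set j : 'I_m.+1 | 0 < j <= k].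
pose gA (o : outcome m.+1) := [forall j in A, o j].
have A0 : ord0 \notin A by rewrite inE.
have gAdep : forall o o' : outcome m.+1,
    (forall j, j \in A -> o j = o' j) -> gA o = gA o'.
  move=> o o' H; apply: eq_forallb => j; case: (boolP (j \in A)) => //= /H ->.
  done.
pose g2 := fun _ : outcome m.+1 => false.
have s0 : ord0 \notin (set0 : {set 'I_m.+1}) by rewrite inE.
have g2dep : forall o o' : outcome m.+1,
    (forall j, j \in (set0 : {set 'I_m.+1}) -> o j = o' j) -> g2 o = g2 o' by [].
have N1c : in_class k (net A gA).
  apply: net_class => //.
  - have : A \subset [set (inord i.+1 : 'I_m.+1) | i : 'I_k].
      apply/subsetP => j; rewrite inE => /andP [j0 jk].
      have jk' : j.-1 < k by lia.
      apply/imsetP; exists (Ordinal jk') => //.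
      apply: val_inj; rewrite /= inordK prednK //; exact: ltn_ord.
    move/subset_leq_card/leq_trans; apply.
    apply: leq_trans (leq_imset_card _ _) _; by rewrite card_ord.
  - move=> j jA; exists [ffun _ => true], [ffun l => l != j]; split.
      by move=> l nl; rewrite !ffunE nl.
    have -> : gA [ffun _ => true] by apply/forall_inP => l _; rewrite ffunE.
    move=> /esym /forall_inP /(_ j jA); by rewrite ffunE eqxx.
have N2c : in_class k (net set0 g2).
  apply: net_class => //; first by rewrite cards0.
  by move=> j; rewrite inE.
pose D := [set x in X | concept (net A gA) x != concept (net set0 g2) x].
have Dsub : D \subset X by apply/subsetP => x; rewrite inE => /andP [].
have Dchar : forall x, x \in D -> [/\ x \in X, x.1 ord0 != x.2 ord0,
    (forall j, j != ord0 -> x.1 j = x.2 j) & gA x.2].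
  move=> [a b]; rewrite inE => /andP [xX].
  have [i [ai H]] := swap_at (Xsw _ xX).
  rewrite /= in ai H.
  rewrite (concept_swap A0 gAdep ai H) (concept_swap s0 g2dep ai H) /=.
  case: (eqVneq i ord0) => [ei|ni]; last by rewrite eqxx.
  subst i => Hd; split => //.
  apply/negPn/negP => /negbTE gf; by rewrite gf eqxx in Hd.
have Dcard : #|D| <= s.
  pose build (t : {ffun 'I_(m-k) -> bool}) : outcome m.+1 :=
    [ffun j : 'I_m.+1 => if j == ord0 then false else if j <= k then true
        else oapp (fun u : 'I_(m-k) => t u) false (insub (j - k.+1))].
  pose up t : outcome m.+1 := [ffun j => if j == ord0 then true else build t j].
  pose h t : pair m.+1 :=
    if (build t, up t) \in X then (build t, up t) else (up t, build t).
  have : D \subset h @: [set: {ffun 'I_(m-k) -> bool}].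
    apply/subsetP => -[a b] /Dchar [/= xX ab H gb].
    pose t := [ffun u : 'I_(m-k) => b (inord (k.+1 + u))].
    have bt : forall j, j != ord0 -> build t j = b j.
      move=> j nj; rewrite ffunE (negbTE nj); case: ifP => jk.
        move/forall_inP: gb => /(_ j); rewrite inE jk -ord_neq0 nj => ->//.
      move/negbT: jk; rewrite -ltnNge => jk.
      have jlt : j - k.+1 < m - k by have := ltn_ord j; lia.
      case: insubP => [u _ uv|]; last by rewrite jlt.
      rewrite /= ffunE; suff -> : (inord (k.+1 + u) : 'I_m.+1) = j by [].
      apply: val_inj; rewrite /= inordK uv; lia.
    have ut : forall j, j != ord0 -> up t j = b j.
      by move=> j nj; rewrite ffunE (negbTE nj) bt.
    apply/imsetP; exists t; first by rewrite inE.
    case b0: (b ord0).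
    - have eb : b = up t.
        apply/ffunP => j; case: (eqVneq j ord0) => [->|nj]; last by rewrite ut.
        by rewrite ffunE eqxx.
      have ea : a = build t.
        apply/ffunP => j; case: (eqVneq j ord0) => [->|nj]; last by rewrite H // bt.
        rewrite ffunE eqxx; move: ab; rewrite b0; by case: (a ord0).
      by rewrite /h -ea -eb xX.
    - have eb : b = build t.
        apply/ffunP => j; case: (eqVneq j ord0) => [->|nj]; last by rewrite bt.
        by rewrite ffunE eqxx.
      have ea : a = up t.
        apply/ffunP => j; case: (eqVneq j ord0) => [->|nj]; last by rewrite H // ut.
        rewrite ffunE eqxx; move: ab; rewrite b0; by case: (a ord0).
      have nX : ((b, a) \in X) = false by move: (Xor _ _ (Xsw _ xX)); rewrite /= xX; case: ((b,a) \in X).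
      by rewrite /h -ea -eb nX.
  move/subset_leq_card/leq_trans; apply.
  apply: leq_trans (leq_imset_card _ _) _.
  by rewrite cardsT card_ffun card_bool card_ord.
have [x0 x0D] : exists x0, x0 \in D.
  pose c1 : outcome m.+1 := [ffun _ => true].
  pose c0 : outcome m.+1 := [ffun j => j != ord0].
  have c01 : c1 ord0 != c0 ord0 by rewrite !ffunE eqxx.
  have c10 : c0 ord0 != c1 ord0 by rewrite !ffunE eqxx.
  have cH : forall j, j != ord0 -> c1 j = c0 j by move=> j nj; rewrite !ffunE nj.
  have cH' : forall j, j != ord0 -> c0 j = c1 j by move=> j nj; rewrite !ffunE nj.
  have sw : is_swap (c1, c0).
    rewrite /is_swap; apply/cards1P; exists ord0; apply/setP => j.
    by rewrite !inE !ffunE /=; case: (j == ord0).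
  have gc0 : gA c0.
    apply/forall_inP => j; rewrite inE ffunE => /andP [j0 _]; by rewrite ord_neq0.
  have gc1 : gA c1 by apply/forall_inP => j _; rewrite ffunE.
  have := Xor _ _ sw; case E1: ((c1, c0) \in X) => /= E2.
  - exists (c1, c0); rewrite inE E1 /=.
    rewrite (concept_swap A0 gAdep c01 cH) (concept_swap s0 g2dep c01 cH) /=.
    by rewrite gc0 ffunE.
  - have E3 : (c0, c1) \in X by move: E2; case: ((c0, c1) \in X).
    exists (c0, c1); rewrite inE E3 /=.
    rewrite (concept_swap A0 gAdep c10 cH') (concept_swap s0 g2dep c10 cH') /=.
    by rewrite gc1 ffunE eqxx /g2.
have [x0X x0d] : x0 \in X /\ concept (net A gA) x0 != concept (net set0 g2) x0.
  by move: x0D; rewrite inE => /andP.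
split.
- case=> Al [bd Hb].
  have E : limited_oracle X D (net A gA) =1 limited_oracle X D (net set0 g2).
    move=> x; rewrite /limited_oracle; case: ifP => xX; first by [].
    case: ifP => xD; first by [].
    congr Some; move: xD; rewrite inE (negbFE xX) andTb.
    by move/negbT; rewrite negbK => /eqP.
  have [h1 [r1 H1]] := Hb _ N1c D Dsub (leq_trans Dcard (leqnn s)).
  have [h2 [r2 H2]] := Hb _ N2c D Dsub (leq_trans Dcard (leqnn s)).
  rewrite (run_ext _ _ _ E) r2 in r1.
  have e : h2 = h1 by case: r1.
  move: x0d; rewrite -(H1 _ x0X) -(H2 _ x0X) e eqxx; done.
- case=> Al [bd Hb].
  have E : malicious_oracle X D (net A gA) =1 malicious_oracle X set0 (net set0 g2).
    move=> x; rewrite /malicious_oracle inE; case: ifP => xX; first by [].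
    case: ifP => xD.
      move: xD; rewrite inE (negbFE xX) andTb.
      by case: (concept (net A gA) x); case: (concept (net set0 g2) x).
    move: xD; rewrite inE (negbFE xX) andTb.
    by move/negbT; rewrite negbK => /eqP.
  have [h1 [r1 H1]] := Hb _ N1c D Dsub Dcard.
  have c0s : #|(set0 : {set pair m.+1})| <= s by rewrite cards0.
  have [h2 [r2 H2]] := Hb _ N2c set0 (sub0set _) c0s.
  rewrite (run_ext _ _ _ E) r2 in r1.
  have e : h2 = h1 by case: r1.
  move: x0d; rewrite -(H1 _ x0X) -(H2 _ x0X) e eqxx; done.
Qed.
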